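(* Let $(\Omega,\mathcal F)$ be a measurable space with $\Sigma\neq\emptyset$, and let $v:\mathcal F\to\mathbb R$ be a non-decreasing, continuous, submodular set function with $v(\emptyset)=0$. Then for every bounded measurable $f:\Omega\to\mathbb R$, $$v(f)=\sup_{\mathcal I\in\Sigma}\int_\Omega f(\omega)\,\mu_{v,\mathcal I}(d\omega).$$
   Context: $\Sigma$ denotes the set of all classes $\mathcal I\subset\mathcal F$ that are chains (totally ordered by inclusion), contain $\emptyset$ and $\Omega$, and generate $\mathcal F$ as a $\sigma$-algebra. $v$ is non-decreasing if $v(A)\le v(B)$ for $A\subset B$; submodular if $v(A)+v(B)\ge v(A\cup B)+v(A\cap B)$. For $\mathcal I\in\Sigma$ let $\mathcal J$ be the algebra generated by $\mathcal I$, whose elements are the sets $\bigcup_{i=1}^n (C_i\cap D_i^c)$ with $C_1\supset D_1\supset\cdots\supset C_n\supset D_n$ in $\mathcal I$; define $\mu_{v,\mathcal I}(\bigcup_{i=1}^n (C_i\cap D_i^c))=\sum_{i=1}^n(v(C_i)-v(D_i))$. $v$ is continuous if for every $\mathcal I\in\Sigma$ this $\mu_{v,\mathcal I}$ is $\sigma$-additive on $\mathcal J$; it then extends uniquely to a measure $\mu_{v,\mathcal I}$ on $\mathcal F$. The Choquet integral is $v(f)=\lim_{y\to-\infty}\big(y\,v(\Omega)+\int_y^\infty v(\{\omega: f(\omega)>z\})\,dz\big)$. *)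

(* Defs.v *)
From HB Require Import structures.
From mathcomp Require Import all_boot all_order all_algebra.
From mathcomp Require Import all_classical all_reals all_analysis.
Set Implicit Arguments. Unset Strict Implicit. Unset Printing Implicit Defensive.
Import Order.TTheory GRing.Theory Num.Theory.
Import numFieldNormedType.Exports.
Local Open Scope classical_set_scope.
Local Open Scope ring_scope.

Section defs.
Context {d : measure_display} {T : measurableType d} {R : realType}.

Definition chain_class (I : set (set T)) :=
  forall A B, I A -> I B -> A `<=` B \/ B `<=` A.

Definition Sigma_class (I : set (set T)) : Prop :=
  [/\ I `<=` measurable, chain_class I, I set0, I setT & <<s I >> = measurable].

Definition sf_nondecreasing (v : set T -> R) :=
  forall A B, measurable A -> measurable B -> A `<=` B -> v A <= v B.

Definition sf_submodular (v : set T -> R) :=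
  forall A B, measurable A -> measurable B ->
    v (A `|` B) + v (A `&` B) <= v A + v B.

Definition J_rep (I : set (set T)) (n : nat) (C D : nat -> set T) :=
  [/\ forall i, (i < n)%N -> I (C i) /\ I (D i),
      forall i, (i < n)%N -> D i `<=` C i &
      forall i, (i.+1 < n)%N -> C i.+1 `<=` D i].

(* the algebra J generated by I *)
Definition J_alg (I : set (set T)) (A : set T) :=
  exists n C D, J_rep I n C D /\
    A = \bigcup_(i in [set i | (i < n)%N]) (C i `\` D i).

(* graph of mu_{v,I} on J: mu_{v,I}(U_i (C_i \ D_i)) = sum_i (v C_i - v D_i) *)
Definition muJ (v : set T -> R) (I : set (set T)) (A : set T) (x : R) :=
  exists n C D, [/\ J_rep I n C D,
    A = \bigcup_(i in [set i | (i < n)%N]) (C i `\` D i) &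
    x = \sum_(0 <= i < n) (v (C i) - v (D i))].

Definition muJ_sigma_additive (v : set T -> R) (I : set (set T)) :=
  forall (A : nat -> set T) (a : nat -> R) (B : set T) (b : R),
    (forall k, muJ v I (A k) (a k)) -> trivIset setT A ->
    muJ v I B b -> \bigcup_k A k = B ->
    (fun n => \sum_(0 <= k < n) a k) @ \oo --> b.

Definition sf_continuous (v : set T -> R) :=
  forall I, Sigma_class I -> muJ_sigma_additive v I.

Definition extends_muJ (v : set T -> R) (I : set (set T))
    (mu : {measure set T -> \bar R}) :=
  forall A x, muJ v I A x -> mu A = x%:E.

Definition choquet (v : set T -> R) (f : T -> R) : \bar R :=
  lim ((fun y : R => ((y * v setT)%:E +
     \int[@lebesgue_measure R]_(z in [set z : R | (y <= z)%R]) (v [set w | (z < f w)%R])%:E)%E)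
     @ -oo).

End defs.

(* Main.v *)
Require Import Defs.
From HB Require Import structures.
From mathcomp Require Import all_boot all_order all_algebra.
From mathcomp Require Import all_classical all_reals all_analysis.
From mathcomp Require Import lra measurable_realfun.
Import Order.TTheory GRing.Theory Num.Theory.
Import numFieldNormedType.Exports.
Local Open Scope classical_set_scope.
Local Open Scope ring_scope.

Set Implicit Arguments. Unset Strict Implicit. Unset Printing Implicit Defensive.

Section chainsets.
Context {d : measure_display} {T : measurableType d}.
Implicit Types I : set (set T).

Definition Sint I : set (set T) :=
  [set X | exists C D, [/\ I C, I D, D `<=` C & X = C `\` D]].

Definition Sgood I := chain_class I /\ I set0.

Lemma chainI I C D : chain_class I -> I C -> I D -> I (C `&` D).
Proof.
move=> ch IC ID; case: (ch _ _ IC ID) => h.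
- by rewrite (setIidl h).
- by rewrite (setIidr h).
Qed.

Lemma chainU I C D : chain_class I -> I C -> I D -> I (C `|` D).
Proof.
move=> ch IC ID; case: (ch _ _ IC ID) => h.
- by rewrite (setUidr h).
- by rewrite (setUidl h).
Qed.

Lemma SintD I C D : Sgood I -> I C -> I D -> Sint I (C `\` D).
Proof.
move=> [ch I0] IC ID; case: (ch _ _ IC ID) => h.
- exists set0, set0; split => //.
  rewrite setD0; apply/seteqP; split => x //= [Cx]; apply; exact: h.
- by exists C, D.
Qed.

Lemma Sint0 I : Sgood I -> Sint I set0.
Proof. by move=> [ch I0]; exists set0, set0; split => //; rewrite setD0. Qed.

Lemma SintI I : Sgood I -> setI_closed (Sint I).
Proof.
move=> g A B [C [D [IC ID DC ->]]] [C' [D' [IC' ID' DC' ->]]].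
have -> : (C `\` D) `&` (C' `\` D') = (C `&` C') `\` (D `|` D').
  apply/seteqP; split => x.
  - by move=> [[? ?] [? ?]]; split => // -[].
  - by move=> [[? ?] nD]; split; split => // ?; apply: nD; [left|right].
by apply: SintD => //; [apply: chainI | apply: chainU]; case: g.
Qed.

Lemma SintsD I : Sgood I -> semi_setD_closed (Sint I).
Proof.
move=> g A B [C [D [IC ID DC ->]]] [C' [D' [IC' ID' DC' ->]]].
have ch := g.1.
set X1 := C `\` (D `|` C'); set X2 := (C `&` D') `\` D.
exists [set X1; X2]; split.
- by rewrite finite_setU; split; apply: finite_set1.
- move=> X [] ->.
  + by apply: SintD => //; apply: chainU.
  + by apply: SintD => //; apply: chainI.
- apply/seteqP; split => x.
  + move=> [[Cx nDx] nCD'].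
    have [C'x|nC'x] := pselect (C' x).
    * have D'x : D' x by apply: contra_notP nCD' => ?; split.
      by exists X2; [right|split].
    * by exists X1; [left|split => // -[]].
  + move=> [X [] -> ].
    * by move=> [Cx nDC']; split; [split => //; apply: contra_not nDC'; left
                                   |move=> [C'x _]; apply: nDC'; right].
    * by move=> [[Cx D'x] nDx]; split => // -[_].
- move=> X Y [] -> [] -> //.
  + by move=> [x [[_ nDC'] [[_ D'x] _]]]; exfalso; apply: nDC'; right; exact: DC'.
  + by move=> [x [[[_ D'x] _] [_ nDC']]]; exfalso; apply: nDC'; right; exact: DC'.
Qed.

End chainsets.

Definition Smeas {d} {T : measurableType d} (I : set (set T)) : set (set T) :=
  if pselect (Sgood I) then Sint I else [set set0].

Definition chainT {d} {T : measurableType d} (I : set (set T)) : Type := T.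

HB.instance Definition _ d (T : measurableType d) (I : set (set T)) :=
  Pointed.on (chainT I).

Section smeas.
Context {d} {T : measurableType d} (I : set (set T)).
Lemma Smeas0 : Smeas I set0.
Proof. by rewrite /Smeas; destruct (pselect (Sgood I)) as [g|ng]; [exact: Sint0|by []]. Qed.
Lemma SmeasI : setI_closed (Smeas I).
Proof.
rewrite /Smeas; destruct (pselect (Sgood I)) as [g|ng]; first exact: SintI.
by move=> A B -> ->; rewrite setI0.
Qed.
Lemma SmeassD : semi_setD_closed (Smeas I).
Proof.
rewrite /Smeas; destruct (pselect (Sgood I)) as [g|ng]; first exact: SintsD.
move=> A B -> ->; exists [set set0]; split.
- exact: finite_set1.
- by move=> X ->.
- by rewrite bigcup_set1 setD0.
- by move=> X Y -> ->.
Qed.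
End smeas.

HB.instance Definition _ d (T : measurableType d) (I : set (set T)) :=
  @isSemiRingOfSets.Build d (chainT I) (Smeas I) (@Smeas0 d T I) (@SmeasI d T I) (@SmeassD d T I).

Lemma chainT_measurableE d (T : measurableType d) (I : set (set T)) :
  @measurable d (chainT I) = Smeas I.
Proof. by []. Qed.

Section lam.
Context {d} {T : measurableType d} {R : realType}.
Implicit Types (I : set (set T)) (v : set T -> R).

Definition rep I (X : set T) (CD : set T * set T) :=
  [/\ I CD.1, I CD.2, CD.2 `<=` CD.1 & X = CD.1 `\` CD.2].

Definition lamR v I (X : set T) : R :=
  match pselect (exists CD, rep I X CD) with
  | left h => let CD := projT1 (cid h) in v CD.1 - v CD.2
  | right _ => 0 end.

Lemma rep_sameC I X C D C' D' : chain_class I -> rep I X (C, D) -> rep I X (C', D') ->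
  X !=set0 -> C `<=` C' -> C = C'.
Proof.
move=> ch [IC ID DC ->] [IC' ID' DC' E] [x [Cx nDx]] CC'.
apply/seteqP; split => // y C'y.
have [//|nCy] := pselect (C y); exfalso.
have D'y : D' y.
  have [//|nD'y] := pselect (D' y).
  have : (C' `\` D') y by split.
  by rewrite -E => -[].
case: (ch _ _ ID' IC) => h.
- exact: nCy (h _ D'y).
- have : (C `\` D) x by split.
  by rewrite E => -[_]; apply; apply: h.
Qed.

Lemma rep_wd v I X C D C' D' : chain_class I -> rep I X (C, D) -> rep I X (C', D') ->
  v C - v D = v C' - v D'.
Proof.
move=> ch r r'.
have [X0|Xn0] := eqVneq X set0.
- move: r r' => [IC ID DC XE] [IC' ID' DC' XE'].
  have e1 : C = D.
    apply/seteqP; split => // y Cy; have [//|nDy] := pselect (D y); exfalso.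
    have : (C `\` D) y by split.
    by rewrite -XE X0.
  have e2 : C' = D'.
    apply/seteqP; split => // y Cy; have [//|nDy] := pselect (D' y); exfalso.
    have : (C' `\` D') y by split.
    by rewrite -XE' X0.
  by rewrite e1 e2 !subrr.
- have Xn : X !=set0 by apply/set0P.
  have eC : C = C'.
    move: r r' => [IC ID DC XE] [IC' ID' DC' XE'].
    case: (ch _ _ IC IC') => h.
    + exact: (rep_sameC ch (And4 IC ID DC XE) (And4 IC' ID' DC' XE')).
    + exact/esym/(rep_sameC ch (And4 IC' ID' DC' XE') (And4 IC ID DC XE)).
  have eD : D = D'.
    move: r r' => [/= IC ID DC XE] [/= IC' ID' DC' XE'].
    apply/seteqP; split => y.
    + move=> Dy; have [//|nD'y] := pselect (D' y); exfalso.
      have : (C' `\` D') y by split => //; rewrite -eC; exact: DC.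
      by rewrite -XE' XE => -[].
    + move=> D'y; have [//|nDy] := pselect (D y); exfalso.
      have : (C `\` D) y by split => //; rewrite eC; exact: DC'.
      by rewrite -XE XE' => -[].
  by rewrite eC eD.
Qed.

Lemma lamR_rep v I X C D : chain_class I -> rep I X (C, D) -> lamR v I X = v C - v D.
Proof.
move=> ch r; rewrite /lamR; case: pselect => [h|nh]; last by exfalso; apply: nh; exists (C, D).
case: (cid h) => -[C' D'] r' /=.
exact: (rep_wd v ch r' r).
Qed.

Lemma muJ1 v I C D : I C -> I D -> D `<=` C -> muJ v I (C `\` D) (v C - v D).
Proof.
move=> IC ID DC; exists 1%N, (fun=> C), (fun=> D); split.
- by split => // i _; split.
- apply/seteqP; split => x; first by move=> h; exists 0%N.
  by move=> [i _].
- by rewrite big_nat1.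
Qed.

Definition good v I := [/\ Sigma_class I, sf_nondecreasing v, sf_continuous v & v set0 = 0].

Lemma good_Sgood v I : good v I -> Sgood I.
Proof. by move=> [[_ ch I0 _ _] _ _ _]. Qed.

Lemma Sint_rep I X : Sint I X -> exists CD, rep I X CD.
Proof. by move=> [C [D [IC ID DC E]]]; exists (C, D). Qed.

Lemma lamR_ge0 v I X : good v I -> 0 <= lamR v I X.
Proof.
move=> [[Im _ _ _ _] nd _ _]; rewrite /lamR; case: pselect => // h.
case: (cid h) => -[C D] [IC ID DC _] /=.
by rewrite subr_ge0; apply: nd => //; apply: Im.
Qed.

Lemma lamR_muJ v I X : good v I -> Sint I X -> muJ v I X (lamR v I X).
Proof.
move=> g [C [D [IC ID DC E]]].
rewrite (@lamR_rep v I X C D) //; last by case: (good_Sgood g).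
by rewrite E; apply: muJ1.
Qed.

Definition lamE v I (X : set (chainT I)) : \bar R :=
  if pselect (good v I) then (lamR v I X)%:E else 0%E.
Arguments lamE v I X : clear implicits.

Lemma lamE0 v I : lamE v I set0 = 0%E.
Proof.
rewrite /lamE; case: pselect => // g; congr (_%:E).
have [ch I0] := good_Sgood g.
rewrite (@lamR_rep v I set0 set0 set0) ?subrr //.
by split => //; rewrite setD0.
Qed.

Lemma lamE_ge0 v I X : (0 <= lamE v I X)%E.
Proof.
rewrite /lamE; case: pselect => // g; rewrite lee_fin; exact: lamR_ge0.
Qed.

Lemma lamE_ssa v I : semi_sigma_additive (lamE v I).
Proof.
move=> F mF tF mU; rewrite /lamE; case: pselect => g; last first.
  by under eq_fun do rewrite big1 //; exact: cvg_cst.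
have Sg := good_Sgood g.
have mF' k : Sint I (F k) by have := mF k; rewrite chainT_measurableE /Smeas; case: pselect.
have mU' : Sint I (\bigcup_n F n) by move: mU; rewrite chainT_measurableE /Smeas; case: pselect.
have := g; case=> gS _ cont _.
have := cont I gS F (fun k => lamR v I (F k)) _ _ (fun k => lamR_muJ g (mF' k)) tF (lamR_muJ g mU') erefl.
move=> h; under eq_fun do rewrite sumEFin.
by apply: cvg_EFin => //; apply: nearW.
Qed.

End lam.
HB.instance Definition _ d (T : measurableType d) (R : realType) (v : set T -> R) (I : set (set T)) := isMeasure.Build _ (chainT I) R (@lamE d T R v I)
  (@lamE0 d T R v I) (@lamE_ge0 d T R v I) (@lamE_ssa d T R v I).



Arguments lamE {d T R} v I X.

Section muT.
Context {d} {T : measurableType d} {R : realType}.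
Implicit Types (I : set (set T)) (v : set T -> R).

Lemma Sigma_Sint I : Sigma_class I -> @measurable d T = <<s Sint I>>.
Proof.
move=> [Im ch I0 IT gen]; apply/seteqP; split.
- rewrite -gen; apply: sub_sigma_algebra2 => C IC.
  by exists C, set0; split => //; rewrite setD0.
- apply: smallest_sub; first exact: sigma_algebra_measurable.
  move=> X [C [D [IC ID DC ->]]]; apply: measurableD; exact: Im.
Qed.

Definition muT v I (X : set T) : \bar R :=
  if pselect (good v I) then mu_ext (lamE v I) X else 0%E.

Lemma muT0 v I : muT v I set0 = 0%E.
Proof. by rewrite /muT; case: pselect => // g; exact: mu_ext0. Qed.

Lemma muT_ge0 v I X : (0 <= muT v I X)%E.
Proof. by rewrite /muT; case: pselect => // g; exact: mu_ext_ge0. Qed.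

Lemma muT_ssa v I : semi_sigma_additive (muT v I).
Proof.
move=> F mF tF mU; rewrite /muT; case: pselect => g; last first.
  by under eq_fun do rewrite big1 //; exact: cvg_cst.
have gS : Sigma_class I by case: g.
have E X : measurable X -> <<s Smeas I>> X.
  have -> : Smeas I = Sint I.
    rewrite /Smeas; destruct (pselect (Sgood I)) as [s|ng]; first done.
    by exfalso; exact: ng (good_Sgood g).
  by rewrite (Sigma_Sint gS).
exact: (@measure_semi_sigma_additive _ _ _ (measure_extension (lamE v I)) F
   (fun i => E _ (mF i)) tF (E _ mU)).
Qed.

End muT.

HB.instance Definition _ d (T : measurableType d) (R : realType) (v : set T -> R) (I : set (set T)) :=
  isMeasure.Build _ T R (@muT d T R v I)
  (@muT0 d T R v I) (@muT_ge0 d T R v I) (@muT_ssa d T R v I).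

Section muT2.
Context {d} {T : measurableType d} {R : realType}.
Implicit Types (I : set (set T)) (v : set T -> R).

Lemma Smeas_good v I : good v I -> Smeas I = Sint I.
Proof.
move=> g; rewrite /Smeas; destruct (pselect (Sgood I)) as [s|ng]; first done.
by exfalso; exact: ng (good_Sgood g).
Qed.

Lemma muT_def v I X : good v I -> muT v I X = mu_ext (lamE v I) X.
Proof. by move=> g; rewrite /muT; destruct (pselect (good v I)) as [h|h]. Qed.

Lemma lamE_def v I X : good v I -> lamE v I X = (lamR v I X)%:E.
Proof. by move=> g; rewrite /lamE; destruct (pselect (good v I)) as [h|h]. Qed.

Lemma muT_int v I C D : good v I -> I C -> I D -> D `<=` C ->
  muT v I (C `\` D) = (v C - v D)%:E.
Proof.
move=> g IC ID DC; rewrite muT_def //.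
have mCD : measurable (C `\` D : set (chainT I)).
  by rewrite chainT_measurableE (Smeas_good g); exists C, D.
rewrite (measurable_mu_extE (lamE v I) mCD); change (lamE v I (C `\` D) = (v C - v D)%:E); rewrite lamE_def //.
congr (_%:E); apply: lamR_rep => //; case: (good_Sgood g) => //.
Qed.

Lemma muT_setT v I : good v I -> muT v I setT = (v setT)%:E.
Proof.
move=> g; case: (g) => -[_ _ I0 IT _] _ _ v0.
have -> : (setT : set T) = setT `\` set0 by rewrite setD0.
by rewrite muT_int // ?v0 ?subr0 ?setD0 //; exact: sub0set.
Qed.

Lemma J_rep_lt I n C D i j : J_rep I n C D -> (i < j)%N -> (j < n)%N -> C j `<=` D i.
Proof.
move=> [h1 h2 h3]; elim: j => // j IH ij jn.
have := h3 j jn; rewrite ltnS leq_eqVlt in ij; case/orP: ij => [/eqP -> //|ij].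
move=> Cj1; apply: subset_trans Cj1 _; apply: subset_trans (h2 _ (ltnW jn)) _.
exact: IH ij (ltnW jn).
Qed.

Lemma muT_extends v I : good v I -> extends_muJ v I (muT v I).
Proof.
move=> g A x [n [C [D [r -> ->]]]].
have [[Im _ _ _ _] _ _ _] := g.
pose F i := if (i < n)%N then C i `\` D i else set0.
have mF i : measurable (F i).
  rewrite /F; case: ifPn => // ilt; apply: measurableD; apply: Im; case: r => h _ _.
  - exact: (h i ilt).1.
  - exact: (h i ilt).2.
have tF : trivIset setT F.
  move=> i j _ _ [x0 [Fi Fj]]; apply/eqP; apply: contraPT isT => /negP ij.
  wlog lt : i j Fi Fj ij / (i < j)%N.
    move=> W; have [lij|lji|eij] := ltngtP i j; first exact: W lij.
    - by apply: W Fj Fi _ lji; rewrite eq_sym.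
    - by rewrite eij eqxx in ij.
  move: Fi Fj; rewrite /F; case: ifPn => // ilt; case: ifPn => // jlt.
  move=> [_ nD] [Cj _] _; apply: nD; exact: (J_rep_lt r lt jlt).
have E : \bigcup_(i in [set i | (i < n)%N]) (C i `\` D i) = \big[setU/set0]_(i < n) F i.
  rewrite -bigcup_mkord; apply: eq_bigcupr => i /= ilt; by rewrite /F ilt.
rewrite E measure_semi_additive //; last by apply: bigsetU_measurable => i _; exact: mF.
rewrite -sumEFin big_mkord; apply: eq_bigr => i _.
rewrite /F ltn_ord /=. rewrite muT_int //; case: r => h h' _.
- exact: (h i (ltn_ord i)).1.
- exact: (h i (ltn_ord i)).2.
- exact: h' (ltn_ord i).
Qed.

Lemma muT_unique v I (mu : {measure set T -> \bar R}) : good v I -> extends_muJ v I mu ->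
  forall X, measurable X -> mu X = muT v I X.
Proof.
move=> g ext X mX; have [gS _ _ _] := g.
apply/esym; apply: (measure_unique (Sint I) (fun=> setT)) => //.
- exact: Sigma_Sint.
- exact/SintI/(good_Sgood g).
- by move=> _; exists setT, set0; case: gS => _ _ ? ? _; split => //; rewrite setD0.
- by rewrite bigcup_const.
- move=> A [C [D [IC ID DC ->]]].
  change (muT v I (C `\` D) = mu (C `\` D)).
  by rewrite muT_int // (ext _ _ (muJ1 v IC ID DC)).
- by move=> _; change (muT v I setT < +oo)%E; rewrite muT_setT // ltry.
Qed.

End muT2.

Section chainadd.
Context {d} {T : measurableType d} {R : realType}.
Implicit Types (I : set (set T)) (v : set T -> R).

Definition chain_add I (A : set T) : set (set T) :=
  [set X | exists C, I C /\ (X = A `&` C \/ X = A `|` C)].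

Lemma chain_add_keep I A U : I U -> U `<=` A \/ A `<=` U -> chain_add I A U.
Proof.
move=> IU [h|h]; exists U; split => //.
- by left; rewrite setIidr.
- by right; rewrite setUidr.
Qed.

Lemma chain_add_A I A : I setT -> chain_add I A A.
Proof. by move=> IT; exists setT; split => //; left; rewrite setIT. Qed.

Lemma chain_add_Sigma I A : Sigma_class I -> measurable A -> Sigma_class (chain_add I A).
Proof.
move=> [Im ch I0 IT gen] mA; split.
- move=> X [C [IC [->|->]]]; [apply: measurableI|apply: measurableU] => //; exact: Im.
- move=> X Y [C [IC [->|->]]] [C' [IC' [->|->]]].
  + by case: (ch _ _ IC IC') => h; [left|right]; apply: setIS.
  + by left => x [Ax _]; left.
  + by right => x [Ax _]; left.
  + by case: (ch _ _ IC IC') => h; [left|right]; apply: setUS.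
- by exists set0; split => //; left; rewrite setI0.
- by exists setT; split => //; right; rewrite setUT.
- apply/seteqP; split.
  + apply: smallest_sub; first exact: sigma_algebra_measurable.
    move=> X [C [IC [->|->]]]; [apply: measurableI|apply: measurableU] => //; exact: Im.
  + rewrite -gen; apply: smallest_sub => //.
    move=> C IC.
    have -> : C = (A `&` C) `|` ((A `|` C) `\` A).
      apply/seteqP; split => x.
      * move=> Cx; have [Ax|nAx] := pselect (A x); [by left|by right; split => //; right].
      * by move=> [[_ ?]|[[?|?] ?]].
    have G1 : <<s chain_add I A >> (A `&` C) by apply: sub_sigma_algebra; exists C; split => //; left.
    have G2 : <<s chain_add I A >> (A `|` C) by apply: sub_sigma_algebra; exists C; split => //; right.
    have G3 : <<s chain_add I A >> A.
      by apply: sub_sigma_algebra; exists setT; split => //; left; rewrite setIT.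
    apply: (@measurableU _ (g_sigma_algebraType (chain_add I A))) => //.
    exact: (@measurableD _ (g_sigma_algebraType (chain_add I A))).
Qed.

Lemma good_add v I A : good v I -> measurable A -> good v (chain_add I A).
Proof. by move=> [gS nd c v0] mA; split => //; exact: chain_add_Sigma. Qed.

Lemma muT_fin v I X : good v I -> measurable X ->
  exists a, muT v I X = a%:E /\ 0 <= a <= v setT.
Proof.
move=> g mX.
have le : (muT v I X <= (v setT)%:E)%E.
  rewrite -(muT_setT g); apply: le_measure => //; rewrite inE //.
have fin : muT v I X \is a fin_num.
  by rewrite ge0_fin_numE ?muT_ge0 //; apply: le_lt_trans le _; rewrite ltry.
exists (fine (muT v I X)); rewrite fineK //; split => //.
by rewrite -lee_fin -lee_fin fineK // muT_ge0 le.
Qed.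

Lemma submod_ineq v (A C D : set T) : sf_nondecreasing v -> sf_submodular v ->
  measurable A -> measurable C -> measurable D -> D `<=` C ->
  v (A `|` C) - v (A `|` D) <= v C - v D.
Proof.
move=> nd sm mA mC mD DC.
have h := sm C (A `|` D) mC (measurableU _ _ mA mD).
have e : C `|` (A `|` D) = A `|` C.
  by rewrite setUCA (setUidl DC) setUC.
rewrite e in h.
have : v D <= v (C `&` (A `|` D)).
  apply: nd => //; first by apply: measurableI => //; exact: measurableU.
  by move=> x Dx; split; [exact: DC|right].
lra.
Qed.

Lemma muT_le v I A : good v I -> sf_submodular v -> measurable A ->
  (muT v I A <= (v A)%:E)%E.
Proof.
move=> g sm mA.
have [[Im ch I0 IT gen] nd cont v0] := g.
have g' := good_add g mA.
pose nu := muT v (chain_add I A).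
have nuAc : nu (~` A) = (v setT - v A)%:E.
  rewrite /nu -setTD muT_int //.
  - by exists setT; split => //; right; rewrite setUT.
  - exact: chain_add_A.
have leAc : ((v setT - v A)%:E <= muT v I (~` A))%E.
  rewrite -nuAc muT_def //; apply: le_ereal_inf_tmp => _ [F [mF cov] <-].
  have mF' k : Sint I (F k).
    by have := mF k; rewrite chainT_measurableE (Smeas_good g).
  have mFT k : (@measurable d T) (F k).
    by have [C [D [IC ID DC ->]]] := mF' k; apply: measurableD; exact: Im.
  apply: (@le_trans _ _ (\sum_(k <oo) nu (~` A `&` F k))%E).
    apply: (@measure_sigma_subadditive _ _ _ nu (~` A) (fun k => ~` A `&` F k)).
    - by move=> k; apply: measurableI => //; exact: measurableC.
    - exact: measurableC.
    - by move=> x Ax; have [k _ Fkx] := cov x Ax; exists k.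
  apply: lee_nneseries => [k _ _|k _]; first exact: muT_ge0.
  have [C [D [IC ID DC FE]]] := mF' k.
  have -> : ~` A `&` F k = (A `|` C) `\` (A `|` D).
    rewrite FE; apply/seteqP; split => x.
    - by move=> [nA [Cx nD]]; split; [right|case].
    - move=> [[Ax|Cx] nAD]; first by exfalso; apply: nAD; left.
      by split; [move=> Ax; apply: nAD; left|split => // Dx; apply: nAD; right].
  rewrite /nu muT_int //.
  - have r : rep I (F k) (C, D) by split.
    rewrite lamE_def // (lamR_rep v ch r).
    rewrite lee_fin; apply: submod_ineq => //; exact: Im.
  - by exists C; split => //; right.
  - by exists D; split => //; right.
  - exact: setUS.
have [a [ea _]] := muT_fin g mA.
have [b [eb _]] := muT_fin g (measurableC mA).
have e0 : (muT v I (A `|` ~` A) = muT v I A + muT v I (~` A))%E :=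
  measureU (muT v I) mA (measurableC mA) (setICr A).
have e : (v setT)%:E = (a + b)%:E by rewrite -(muT_setT g) -(setUv A) e0 ea eb.
move: leAc; rewrite ea eb lee_fin => leAc; move: e => [] e.
rewrite lee_fin; lra.
Qed.

End chainadd.

Section riemann.
Context {R : realType} (g : R -> R).
Hypothesis gdec : forall x y : R, x <= y -> g y <= g x.
Hypothesis g0 : forall z, 0 <= g z.

Local Notation mu := (@lebesgue_measure R).

Definition Int (y : R) : \bar R :=
  (\int[mu]_(z in [set z : R | (y <= z)%R]) (g z)%:E)%E.

Lemma ge_itv (y : R) : [set z : R | y <= z] = `[y, +oo[%classic.
Proof. by apply/seteqP; split => z; rewrite /= in_itv /= andbT. Qed.

Lemma mge (y : R) : measurable [set z : R | y <= z].
Proof. by rewrite ge_itv; exact: measurable_itv. Qed.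

Lemma gmeas (D : set R) : measurable D -> measurable_fun D (fun z => (g z)%:E).
Proof.
move=> mD; apply/(measurable_EFinP D g); apply: nonincreasing_measurable => //.
Qed.

Lemma Int_split (y c : R) : y <= c ->
  Int y = (\int[mu]_(z in `[y, c[) (g z)%:E + Int c)%E.
Proof.
move=> yc; rewrite /Int.
have -> : [set z : R | y <= z] = `[y, c[%classic `|` [set z | c <= z].
  apply/seteqP; split => z /=.
  - move=> yz; have [zc|cz] := ltP z c; [left|by right].
    by rewrite /= in_itv /= yz zc.
  - move=> [|]; last exact: le_trans.
    by rewrite /= in_itv /= => /andP[].
rewrite ge0_integral_setU //; try (by apply: measurable_itv); try (by apply: mge).
- by apply: gmeas; apply: measurableU; [exact: measurable_itv|exact: mge].
- by move=> z _; rewrite lee_fin.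
- apply/disj_setPS => z [] /=; rewrite in_itv /= => /andP[_ zc] cz.
  by move: (lt_le_trans zc cz); rewrite ltxx.
Qed.

Lemma Int_piece (a h : R) : 0 < h ->
  ((h * g (a + h))%:E <= \int[mu]_(z in `[a, (a + h)%R[) (g z)%:E)%E /\
  (\int[mu]_(z in `[a, (a + h)%R[) (g z)%:E <= (h * g a)%:E)%E.
Proof.
move=> h0.
have mI : measurable `[a, (a + h)%R[%classic by exact: measurable_itv.
have lI : mu `[a, (a + h)%R[%classic = h%:E.
  rewrite lebesgue_measure_itv /= lte_fin ltrDl h0 -EFinD; congr (_%:E); lra.
split.
- apply: (@le_trans _ _ (\int[mu]_(z in `[a, (a + h)%R[) (cst (g (a + h))%:E z))%E).
    by rewrite integral_cst //= lI -EFinM mulrC.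
  apply: ge0_le_integral => //; try (by move=> z _; rewrite lee_fin);
    try (by apply: measurable_cst); try (by apply: gmeas; exact: measurable_itv).
  move=> z; rewrite /= in_itv /= => /andP[_ zh]; rewrite lee_fin; apply: gdec.
    exact: ltW.
- apply: (@le_trans _ _ (\int[mu]_(z in `[a, (a + h)%R[) (cst (g a)%:E z))%E); last first.
    by rewrite integral_cst //= lI -EFinM mulrC.
  apply: ge0_le_integral => //; try (by move=> z _; rewrite lee_fin);
    try (by apply: measurable_cst); try (by apply: gmeas; exact: measurable_itv).
  move=> z; rewrite /= in_itv /= => /andP[az _]; rewrite lee_fin; exact: gdec.
Qed.

Lemma Int_zero (a : R) : (forall z, a <= z -> g z = 0) -> Int a = 0%E.
Proof. by move=> h; apply: integral0_eq => z /= az; rewrite h. Qed.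

Lemma Int_riemann (h : R) (N : nat) : 0 < h -> forall a : R,
  (forall z, a + N%:R * h <= z -> g z = 0) ->
  ((\sum_(j < N) h * g (a + j.+1%:R * h))%:E <= Int a)%E /\
  (Int a <= (\sum_(j < N) h * g (a + j%:R * h))%:E)%E.
Proof.
move=> h0; elim: N => [|N IH] a gz.
  rewrite !big_ord0 Int_zero // => z az; apply: gz; by rewrite mulr0n mul0r addr0.
have gz' : forall z, (a + h) + N%:R * h <= z -> g z = 0.
  by move=> z hz; apply: gz; apply: le_trans hz; rewrite -natr1 mulrDl mul1r; lra.
have [IH1 IH2] := IH (a + h) gz'.
have [P1 P2] := @Int_piece a h h0.
have aah : a <= a + h by rewrite lerDl ltW.
rewrite (Int_split aah).
rewrite !big_ord_recl /= mul0r addr0 mul1r !EFinD.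
have E1 : \sum_(i < N) h * g (a + (bump 0 i).+1%:R * h) =
          \sum_(j < N) h * g (a + h + j.+1%:R * h).
  by apply: eq_bigr => i _; congr (h * g _); rewrite /bump /= add1n -[in LHS]natr1 mulrDl mul1r; lra.
have E2 : \sum_(i < N) h * g (a + (bump 0 i)%:R * h) =
          \sum_(j < N) h * g (a + h + j%:R * h).
  by apply: eq_bigr => i _; congr (h * g _); rewrite /bump /= add1n -[in LHS]natr1 mulrDl mul1r; lra.
rewrite E1 E2; split; apply: leeD => //.
Qed.

Lemma Int_flat (y a V : R) : y <= a -> (forall z, z < a -> g z = V) ->
  Int y = (((a - y) * V)%:E + Int a)%E.
Proof.
move=> ya gV; rewrite (Int_split ya); congr (_ + _)%E.
rewrite (_ : \int[mu]_(z in _) _ = \int[mu]_(z in `[y, a[) (cst V%:E z))%E.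
  rewrite integral_cst; last exact: measurable_itv.
  rewrite /= lebesgue_measure_itv /=.
  have [ya'|ay] := ltP y a.
    by rewrite lte_fin ya' -EFinD -EFinM mulrC.
  have -> : a = y by apply/eqP; rewrite eq_le ay ya.
  by rewrite ltxx subrr mul0r mule0.
apply: eq_integral => z; rewrite inE /= in_itv /= => /andP[_ za].
by rewrite gV.
Qed.

End riemann.

Lemma choquet_eval {d} {T : measurableType d} {R : realType} (v : set T -> R) (f : T -> R) (a : R) :
  (forall x y : R, x <= y -> v [set w | y < f w] <= v [set w | x < f w]) ->
  (forall z : R, 0 <= v [set w | z < f w]) ->
  (forall z : R, z < a -> v [set w | z < f w] = v setT) ->
  choquet v f = ((a * v setT)%:E + Int (fun z => v [set w | (z < f w)%R]) a)%E.
Proof.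
move=> gdec g0 gV; rewrite /choquet.
apply: cvg_lim => //; apply: cvg_near_cst.
near=> y.
have ya : y <= a by near: y; apply: nbhs_ninfty_le; exact: num_real.
have := @Int_flat R (fun z => v [set w | z < f w]) gdec g0 y a (v setT) ya gV.
rewrite /Int => ->; rewrite addeA -EFinD; congr (_%:E + _)%E.
by rewrite mulrBl addrC subrK.
Unshelve. all: by end_near.
Qed.

Section count.
Context {R : realType} (h x : R).
Hypothesis h0 : 0 < h.

Definition cnt (a : R) (N : nat) : R := \sum_(j < N) (if a + j.+1%:R * h < x then 1 else 0).

Lemma cnt_ge0 a N : 0 <= cnt a N.
Proof. by apply: sumr_ge0 => j _; case: ifP. Qed.

Lemma cnt0 a N : x <= a -> cnt a N = 0.
Proof.
move=> xa; apply: big1 => j _; case: ifP => // /[dup] hx _.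
have : a < a + j.+1%:R * h by rewrite ltrDl mulr_gt0 // ltr0n.
lra.
Qed.

Lemma cntS a N : cnt a N.+1 = (if a + h < x then 1 else 0) + cnt (a + h) N.
Proof.
rewrite /cnt big_ord_recl /= mul1r; congr (_ + _); apply: eq_bigr => j _.
suff -> : a + (bump 0 j).+1%:R * h = a + h + j.+1%:R * h by [].
by rewrite /bump /= add1n -[in LHS]natr1 mulrDl mul1r; lra.
Qed.

Lemma cnt_low N : forall a, a <= x -> a + h * cnt a N <= x.
Proof.
elim: N => [|N IH] a ax; first by rewrite /cnt big_ord0 mulr0 addr0.
rewrite cntS; have [ahx|xah] := ltP (a + h) x.
- rewrite /=; have := IH (a + h) (ltW ahx); lra.
- rewrite (cnt0 N xah) /=; lra.
Qed.

Lemma cnt_up N : forall a, x <= a + N.+1%:R * h -> x <= a + h + h * cnt a N.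
Proof.
elim: N => [|N IH] a xa.
  by rewrite /cnt big_ord0 mulr0 addr0; move: xa; rewrite mul1r.
rewrite cntS; have [ahx|xah] := ltP (a + h) x.
- have : x <= a + h + N.+1%:R * h.
    by move: xa; rewrite -[N.+2%:R]natr1 mulrDl mul1r; lra.
  by move/IH; rewrite /=; lra.
- rewrite /=; have := cnt_ge0 (a + h) N => p.
  have : 0 <= h * (0 + cnt (a + h) N) by rewrite mulr_ge0 // ?add0r // ltW.
  lra.
Qed.

End count.

Section intstep.
Context {d} {T : measurableType d} {R : realType}.
Variables (mu : {measure set T -> \bar R}) (V : R) (f : T -> R) (a h : R).
Hypothesis muT : mu setT = V%:E.
Hypothesis mf : measurable_fun setT f.

Definition Ulev (j : nat) : set T := [set w | a + j.+1%:R * h < f w].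

Lemma mUlev j : measurable (Ulev j).
Proof.
rewrite /Ulev; have -> : [set w | a + j.+1%:R * h < f w] = f @^-1` `]a + j.+1%:R * h, +oo[.
  by apply/seteqP; split => w /=; rewrite in_itv /= andbT.
by rewrite -[X in measurable X]setTI; apply: mf => //; exact: measurable_itv.
Qed.

Lemma bnd_fun (s : T -> R) (M : R) : (forall w, `|s w| <= M) -> [bounded s x | x in setT].
Proof.
move=> sM; exists M; split; first by rewrite num_real.
by move=> y My w _; apply: le_trans (sM w) _; exact: ltW.
Qed.

Lemma ind_eq j w : (if a + j.+1%:R * h < f w then 1 else 0) = \1_(Ulev j) w :> R.
Proof.
rewrite indicE; case: ifPn => H.
- by rewrite mem_set.
- by rewrite memNset //= => /(negP H).
Qed.

Lemma int_step (m : nat -> R) (c : R) : (forall j, mu (Ulev j) = (m j)%:E) ->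
  forall N,
  mu.-integrable setT (EFin \o (fun w => c + h * cnt h (f w) a N)) /\
  (\int[mu]_w (c + h * cnt h (f w) a N)%:E = (c * V + h * \sum_(j < N) m j)%:E)%E.
Proof.
move=> mU; have muTf : (mu setT < +oo)%E by rewrite muT ltry.
elim=> [|N [IHi IHe]].
  have E w : c + h * cnt h (f w) a 0 = c by rewrite /cnt big_ord0 mulr0 addr0.
  split.
  - rewrite (_ : (fun w => _) = fun=> c); last by apply/funext => w; rewrite E.
    apply: measurable_bounded_integrable => //; try exact: measurable_cst.
    exact: (@bnd_fun _ `|c|).
  - under eq_integral do rewrite E.
    by rewrite integral_cst // muT -EFinM big_ord0 mulr0 addr0.
have E w : c + h * cnt h (f w) a N.+1 = (c + h * cnt h (f w) a N) + h * \1_(Ulev N) w.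
  by rewrite /cnt big_ord_recr /= ind_eq mulrDr addrA.
have iI : mu.-integrable setT (EFin \o (fun w => h * \1_(Ulev N) w)).
  have mi : measurable_fun setT (fun w => h * \1_(Ulev N) w).
    by apply: measurable_funM; [exact: measurable_cst| apply: measurable_indic; exact: mUlev].
  apply: measurable_bounded_integrable => //.
  apply: (@bnd_fun _ `|h|) => w; rewrite normrM ler_piMr //.
  by rewrite indicE; case: (_ \in _); rewrite ?normr1 ?normr0.
have ifun : (fun w => c + h * cnt h (f w) a N.+1) =
   (fun w => (c + h * cnt h (f w) a N) + h * \1_(Ulev N) w).
  by apply/funext => w; rewrite E.
split.
- rewrite ifun; exact: (integrableD _ IHi iI).
- under eq_integral do rewrite E EFinD.
  rewrite (integralD_EFin _ IHi iI) // IHe.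
  have -> : (\int[mu]_x (EFin \o (fun w : T => (h * \1_(Ulev N) w)%R)) x =
     \int[mu]_x (h%:E * (\1_(Ulev N) x)%:E))%E.
    by apply: eq_integral => x _; rewrite /= EFinM.
  rewrite integralZl //; last first.
    have mi : measurable_fun setT (\1_(Ulev N) : T -> R) by apply: measurable_indic; exact: mUlev.
    apply: measurable_bounded_integrable => //.
    apply: (@bnd_fun _ 1) => w.
    by rewrite indicE; case: (_ \in _); rewrite ?normr1 ?normr0.
  rewrite integral_indic //; last exact: mUlev.
  by rewrite setIT mU -!EFinM -EFinD big_ord_recr /= mulrDr addrA.
Qed.

End intstep.

Lemma step_bounds {d} {T : measurableType d} {R : realType}
  (mu : {measure set T -> \bar R}) (V : R) (f : T -> R) (a h M0 : R) (N : nat) (m : nat -> R) :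
  mu setT = V%:E -> measurable_fun setT f -> (forall w, `|f w| <= M0) ->
  (forall w, a <= f w) -> (forall w, f w <= a + N.+1%:R * h) -> 0 < h ->
  (forall j, mu (Ulev f a h j) = (m j)%:E) ->
  ((a * V + h * \sum_(j < N) m j)%:E <= \int[mu]_w (f w)%:E)%E /\
  (\int[mu]_w (f w)%:E <= ((a + h) * V + h * \sum_(j < N) m j)%:E)%E.
Proof.
move=> muT mf fM af fa h0 mU.
have muTf : (mu setT < +oo)%E by rewrite muT ltry.
have fi : mu.-integrable setT (EFin \o f).
  by apply: measurable_bounded_integrable => //; exact: (bnd_fun fM).
have [i1 e1] := int_step muT mf a mU N.
have [i2 e2] := int_step muT mf (a + h) mU N.
split.
- rewrite -e1; apply: le_integral => // w _; rewrite lee_fin.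
  exact: (cnt_low h0).
- rewrite -e2; apply: le_integral => // w _; rewrite lee_fin.
  exact: (cnt_up h0).
Qed.

Lemma small_N {R : realType} (K e : R) : 0 <= K -> 0 < e -> exists N : nat, K / N.+1%:R <= e.
Proof.
move=> K0 e0; exists (Num.trunc (K / e)).
have := truncnS_gt (K / e); set n := Num.trunc _ => H.
rewrite ler_pdivrMr ?ltr0n //; rewrite ltr_pdivrMr // in H.
by rewrite mulrC; exact: ltW.
Qed.

Unset Implicit Arguments. Set Strict Implicit.

Theorem theorem10 (d : measure_display) (T : measurableType d) (R : realType)
    (v : set T -> R) :
  (exists I : set (set T), Sigma_class I) ->
  sf_nondecreasing v -> sf_continuous v -> sf_submodular v -> v set0 = 0 ->
  forall f : T -> R, measurable_fun setT f -> (exists M : R, forall w, `|f w| <= M) ->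
  choquet v f =
  ereal_sup [set x | exists (I : set (set T)) (mu : {measure set T -> \bar R}),
                [/\ Sigma_class I, extends_muJ v I mu & x = (\int[mu]_w (f w)%:E)%E]].
Proof.
move=> [I0 SI0] nd cont sm v0 f mf [M0 hM].
set V := v setT.
pose M := `|M0| + 1; pose a := - M.
have Mpos : 0 < M by rewrite /M ltr_wpDl.
have fge w : a < f w.
  have := hM w; rewrite ler_norml => /andP[h1 _].
  have := ler_norm M0; rewrite /a /M; lra.
have fle w : f w < M.
  have := hM w; rewrite ler_norml => /andP[_ h2].
  have := ler_norm M0; rewrite /M; lra.
have mlev z : measurable [set w | z < f w].
  have -> : [set w | z < f w] = f @^-1` `]z, +oo[.
    by apply/seteqP; split => w /=; rewrite in_itv /= andbT.
  by rewrite -[X in measurable X]setTI; apply: mf => //; exact: measurable_itv.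
pose g z := v [set w | z < f w].
have gdec x y : x <= y -> g y <= g x.
  move=> xy; apply: nd => // w /= yw; exact: le_lt_trans yw.
have g0 z : 0 <= g z by rewrite -v0; apply: nd => //; exact: sub0set.
have gV z : z < a -> g z = V.
  move=> za; rewrite /g /V; congr v; apply/seteqP; split => // w _ /=.
  exact: lt_trans za (fge w).
have gZ z : M <= z -> g z = 0.
  move=> Mz; rewrite /g -v0; congr v; apply/seteqP; split => // w /= zw.
  have := fle w; lra.
have ch : choquet v f = ((a * V)%:E + Int g a)%E := choquet_eval gdec g0 gV.
have riem N : let h := 2 * M / N.+1%:R in
   ((\sum_(j < N.+1) h * g (a + j.+1%:R * h))%:E <= Int g a)%E /\
   (Int g a <= (\sum_(j < N.+1) h * g (a + j%:R * h))%:E)%E.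
  move=> h; apply: Int_riemann => //.
    by rewrite /h divr_gt0 ?ltr0n // mulr_gt0.
  move=> z; rewrite /h mulrC divfK ?pnatr_eq0 // /a => Mz; apply: gZ; lra.
have [r Er] : exists r, Int g a = r%:E.
  have [_ up] := riem 0%N.
  have ge : (0 <= Int g a)%E by apply: integral_ge0 => z _; rewrite lee_fin.
  exists (fine (Int g a)); rewrite fineK // ge0_fin_numE //.
  exact: le_lt_trans up (ltry _).
rewrite ch Er -EFinD.
have V0 : 0 <= V by rewrite /V -v0; apply: nd => //; exact: sub0set.
have gleV z : g z <= V by apply: nd => //.
have hpos N : 0 < 2 * M / N.+1%:R by rewrite divr_gt0 ?ltr0n // mulr_gt0.
have fleh N w : f w <= a + N.+2%:R * (2 * M / N.+1%:R).
  have e : a + N.+1%:R * (2 * M / N.+1%:R) = M.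
    by rewrite mulrC divfK ?pnatr_eq0 // /a; lra.
  rewrite -[N.+2%:R]natr1 mulrDl mul1r.
  move: e (hpos N) (fle w); move: (2 * M / N.+1%:R) (N.+1%:R) => h' k; lra.
have Ueq N j : Ulev f a (2 * M / N.+1%:R) j = [set w | a + j.+1%:R * (2 * M / N.+1%:R) < f w] by [].
have hV N : 2 * M / N.+1%:R * V = 2 * M * V / N.+1%:R by rewrite mulrAC.
apply/eqP; rewrite eq_le; apply/andP; split.
-
  apply/lee_addgt0Pr => e e0.
  have [N hN] := small_N (mulr_ge0 (mulr_ge0 (ler0n _ 2) (ltW Mpos)) V0) e0.
  set h := 2 * M / N.+1%:R.
  pose Ich := fix Ich k := if k is k'.+1 then chain_add (Ich k') (Ulev f a h k') else I0.
  have gI0 : good v I0 by split.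
  have IchP k : good v (Ich k) /\ (forall j, (j < k)%N -> Ich k (Ulev f a h j)).
    elim: k => [|k [gk IHk]]; first by split.
    split; first exact: good_add gk (mUlev a h mf k).
    move=> j; rewrite ltnS leq_eqVlt => /orP[/eqP ->|jk].
    - by apply: chain_add_A; case: gk => -[].
    - apply: chain_add_keep; first exact: IHk.
      right => w /=; apply: le_lt_trans; rewrite lerD2l ler_pM2r ?hpos // ler_nat.
      exact: ltnW.
  have [gI UI] := IchP N.+1.
  pose I := Ich N.+1.
  pose m j := fine (muT v I (Ulev f a h j)).
  have mE j : muT v I (Ulev f a h j) = (m j)%:E.
    have [y [ey _]] := muT_fin gI (mUlev a h mf j).
    by rewrite /m ey.
  have mv j : (j < N.+1)%N -> m j = v (Ulev f a h j).
    move=> jN; have I0' : I set0 by case: gI => -[].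
    have e1 := muT_int gI (UI j jN) I0' (sub0set _).
    by move: e1; rewrite setD0 mE v0 subr0 => -[].
  have [low _] := @step_bounds _ _ _ (muT v I : {measure set T -> \bar R}) V f a h M0 N.+1 m
    (muT_setT gI) mf hM (fun w => ltW (fge w)) (fleh N) (hpos N) mE.
  have xin : [set x | exists (I : set (set T)) (mu : {measure set T -> \bar R}),
                [/\ Sigma_class I, extends_muJ v I mu & x = (\int[mu]_w (f w)%:E)%E]]
             (\int[(muT v I : {measure set T -> \bar R})]_w (f w)%:E)%E.
    exists I, (muT v I : {measure set T -> \bar R}); split => //.
    - by case: gI.
    - exact: muT_extends.
  have sup := ereal_sup_ubound xin.
  apply: le_trans (leeD2r e%:E sup).
  apply: le_trans (leeD2l _ (_ : (h * V)%:E <= e%:E)%E); last by rewrite lee_fin /h hV.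
  apply: le_trans (leeD2r _ low); rewrite -EFinD lee_fin.
  have [_ up] := riem N; rewrite Er lee_fin -/h in up.
  have S : \sum_(j < N.+1) h * g (a + j%:R * h) <= h * V + \sum_(j < N.+1) h * g (a + j.+1%:R * h).
    rewrite big_ord_recl big_ord_recr /=.
    have -> : \sum_(i < N) h * g (a + (bump 0 i)%:R * h) = \sum_(i < N) h * g (a + i.+1%:R * h).
      by apply: eq_bigr => i _; rewrite /bump add1n.
    have : 0 <= h * g (a + N.+1%:R * h) by apply: mulr_ge0; [exact: ltW (hpos N)|exact: g0].
    have : h * g (a + 0%:R * h) <= h * V by rewrite ler_pM2l ?hpos.
    lra.
  have S2 : \sum_(j < N.+1) h * g (a + j.+1%:R * h) = h * \sum_(j < N.+1) m j.
    rewrite mulr_sumr; apply: eq_bigr => j _; rewrite mv //.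
  lra.
-
  apply: ub_ereal_sup => _ [I [mu [SI ext ->]]].
  have gI : good v I by split.
  have muE X : measurable X -> mu X = muT v I X by move=> mX; apply: (muT_unique gI ext)...
  have muS : mu setT = V%:E by rewrite muE // muT_setT.
  apply/lee_addgt0Pr => e e0.
  have [N hN] := small_N (mulr_ge0 (mulr_ge0 (ler0n _ 2) (ltW Mpos)) V0) e0.
  set h := 2 * M / N.+1%:R.
  pose m j := fine (mu (Ulev f a h j)).
  have mE j : mu (Ulev f a h j) = (m j)%:E.
    have [y [ey _]] := muT_fin gI (mUlev a h mf j).
    by rewrite /m muE ?ey //; exact: mUlev.
  have mle j : m j <= v (Ulev f a h j).
    have := muT_le gI sm (mUlev a h mf j); rewrite -muE ?mE ?lee_fin //; exact: mUlev.
  have [_ up] := @step_bounds _ _ _ mu V f a h M0 N.+1 m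
    muS mf hM (fun w => ltW (fge w)) (fleh N) (hpos N) mE.
  apply: le_trans up _; rewrite -EFinD lee_fin.
  have [low _] := riem N; rewrite Er lee_fin -/h in low.
  have S2 : h * \sum_(j < N.+1) m j <= \sum_(j < N.+1) h * g (a + j.+1%:R * h).
    rewrite mulr_sumr; apply: ler_sum => j _; rewrite ler_pM2l ?hpos //; exact: (mle j).
  have : h * V <= e by rewrite /h hV.
  lra.
Qed.
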